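(* Let $\omega\ge1$ and $n>2$ be integers, $r=2^\omega$, $R=2^{\omega n}$, and let $p$ be a positive odd integer. Let $T\ge0$ be an integer and $T_i=\lfloor T/r^{i-1}\rfloor\bmod r$ for $i\ge1$. For $1\le i\le n-2$ let $M_i$ be an integer with $M_i\equiv r^{-n+i+1}\pmod p$, let $H_i=T_iM_i$, and let $T^{(n-2)}=\lfloor T/r^{n-2}\rfloor+\sum_{i=1}^{n-2}H_i$. Then $$TR^{-1}\equiv T^{(n-2)}r^{-2}\pmod p.$$
   Context: Negative powers of $r$ and $R$ denote powers of their inverses modulo $p$ (which exist since $p$ is odd). $TR^{-1}\bmod p$ is the Montgomery reduction $\mathrm{REDC}(T)$. *)

(* Defs.v *)
From Stdlib Require Import ZArith List.
Open Scope Z_scope.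

Definition congr (p a b : Z) : Prop := (p | a - b)%Z.

Definition inv_mod (p a u : Z) : Prop := congr p (a * u) 1.

Definition digit (r T : Z) (i : nat) : Z := (T / r ^ (Z.of_nat i - 1)) mod r.

(* sum_{i=a}^{b} f i  (empty if b < a) *)
Definition sum_range (a b : nat) (f : nat -> Z) : Z :=
  fold_right Z.add 0 (map f (seq a (S b - a))).

(* Main.v *)
Require Import Defs.
From Stdlib Require Import ZArith List Lia Setoid Morphisms.
Open Scope Z_scope.

Lemma congr_refl p a : congr p a a.
Proof. unfold congr. rewrite Z.sub_diag. apply Z.divide_0_r. Qed.
Lemma congr_sym p a b : congr p a b -> congr p b a.
Proof. unfold congr. intros H. replace (b - a) with (-(a-b)) by ring. now apply Z.divide_opp_r. Qed.
Lemma congr_trans p a b c : congr p a b -> congr p b c -> congr p a c.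
Proof. unfold congr. intros H1 H2. replace (a - c) with ((a-b)+(b-c)) by ring. now apply Z.divide_add_r. Qed.

#[local] Instance congr_equiv p : Equivalence (congr p).
Proof. split; red; [apply congr_refl|apply congr_sym|apply congr_trans]. Qed.

#[local] Instance add_proper p : Proper (congr p ==> congr p ==> congr p) Z.add.
Proof. intros a b H c d H'. unfold congr in *.
  replace (a + c - (b + d)) with ((a-b)+(c-d)) by ring. now apply Z.divide_add_r. Qed.

#[local] Instance mul_proper p : Proper (congr p ==> congr p ==> congr p) Z.mul.
Proof. intros a b H c d H'. unfold congr in *.
  replace (a * c - b * d) with ((a-b)*c+b*(c-d)) by ring.
  apply Z.divide_add_r; [apply Z.divide_mul_l|apply Z.divide_mul_r]; auto. Qed.

Lemma pow_congr p a b k : congr p a b -> congr p (a ^ k) (b ^ k).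
Proof.
  intros H. destruct (Z_lt_le_dec k 0) as [Hk|Hk].
  - rewrite !Z.pow_neg_r by lia. reflexivity.
  - pattern k. apply natlike_ind; auto.
    + reflexivity.
    + intros j Hj IH. rewrite !Z.pow_succ_r by lia. now rewrite IH, H.
Qed.

Lemma pow_one_congr p a k : 0 <= k -> congr p a 1 -> congr p (a ^ k) 1.
Proof. intros Hk H. rewrite (pow_congr _ _ _ k H). rewrite Z.pow_1_l by lia. reflexivity. Qed.

Lemma sum_list_congr p (l : list nat) (f g : nat -> Z) :
  (forall i, In i l -> congr p (f i) (g i)) ->
  congr p (fold_right Z.add 0 (map f l)) (fold_right Z.add 0 (map g l)).
Proof.
  induction l as [|a l IH]; simpl; intros H.
  - reflexivity.
  - rewrite (H a (or_introl eq_refl)), IH; [reflexivity|]. intros; apply H; auto.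
Qed.

Lemma sum_list_mul (l : list nat) (f : nat -> Z) c :
  fold_right Z.add 0 (map f l) * c = fold_right Z.add 0 (map (fun i => f i * c) l).
Proof. induction l; simpl; [ring|rewrite <- IHl; ring]. Qed.

Lemma sum_range_S (m : nat) f :
  sum_range 1 (S m) f = sum_range 1 m f + f (S m).
Proof.
  unfold sum_range. replace (S (S m) - 1)%nat with (S m) by lia.
  replace (S m - 1)%nat with m by lia.
  rewrite seq_S, map_app, fold_right_app. simpl.
  replace (1 + m)%nat with (S m) by lia.
  induction (seq 1 m); simpl; [ring|rewrite IHl; ring].
Qed.

Lemma Zmod_mul_r a b c : 0 < b -> 0 < c ->
  a mod (b * c) = a mod b + b * ((a / b) mod c).
Proof.
  intros Hb Hc. rewrite !Z.mod_eq by lia. rewrite <- Z.div_div by lia. ring.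
Qed.

Lemma digits_decomp r T (m : nat) : 0 < r ->
  T mod r ^ Z.of_nat m = sum_range 1 m (fun i => digit r T i * r ^ (Z.of_nat i - 1)).
Proof.
  intros Hr. induction m as [|m IH].
  - simpl. rewrite Z.mod_1_r. reflexivity.
  - rewrite sum_range_S, <- IH. unfold digit.
    replace (Z.of_nat (S m) - 1) with (Z.of_nat m) by lia.
    rewrite Nat2Z.inj_succ, Z.pow_succ_r by lia.
    assert (0 < r ^ Z.of_nat m) by (apply Z.pow_pos_nonneg; lia).
    rewrite (Z.mul_comm r), Zmod_mul_r by lia. ring.
Qed.

Theorem lemma3 (w n : nat) (p T : Z) (M : nat -> Z) (rinv Rinv : Z) :
  (1 <= w)%nat -> (2 < n)%nat ->
  0 < p -> Z.odd p = true -> 0 <= T ->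
  (* rinv = r^{-1} mod p, Rinv = R^{-1} mod p, with r = 2^w, R = 2^(w n) *)
  inv_mod p (2 ^ Z.of_nat w) rinv ->
  inv_mod p (2 ^ (Z.of_nat w * Z.of_nat n)) Rinv ->
  (* M_i ≡ r^{-n+i+1} = (r^{-1})^{n-i-1} (mod p) for 1 <= i <= n-2 *)
  (forall i : nat, (1 <= i <= n - 2)%nat ->
     congr p (M i) (rinv ^ (Z.of_nat n - Z.of_nat i - 1))) ->
  congr p (T * Rinv)
    ((T / (2 ^ Z.of_nat w) ^ (Z.of_nat n - 2)
      + sum_range 1 (n - 2) (fun i => digit (2 ^ Z.of_nat w) T i * M i))
     * rinv ^ 2).
Proof.
  intros Hw Hn Hp Hodd HT Hr HR HM.
  unfold inv_mod in *.
  set (r := 2 ^ Z.of_nat w) in *.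
  set (x := rinv) in *.
  assert (Hrpos : 0 < r) by (apply Z.pow_pos_nonneg; lia).
  assert (HRe : 2 ^ (Z.of_nat w * Z.of_nat n) = r ^ Z.of_nat n)
    by (unfold r; rewrite <- Z.pow_mul_r; lia).
  rewrite HRe in HR.
  assert (HRinv : congr p Rinv (x ^ Z.of_nat n)).
  { assert (H1 : congr p ((r*x) ^ Z.of_nat n) 1) by (apply pow_one_congr; [lia|auto]).
    transitivity ((r*x) ^ Z.of_nat n * Rinv).
    - rewrite H1. rewrite Z.mul_1_l. reflexivity.
    - replace ((r*x) ^ Z.of_nat n * Rinv) with (x ^ Z.of_nat n * (r ^ Z.of_nat n * Rinv))
        by (rewrite Z.pow_mul_l; ring).
      rewrite HR. rewrite Z.mul_1_r. reflexivity. }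
  rewrite HRinv.
  set (m := (n - 2)%nat).
  assert (Hm : Z.of_nat n - 2 = Z.of_nat m) by (unfold m; lia).
  rewrite Hm.
  assert (Hrm : 0 < r ^ Z.of_nat m) by (apply Z.pow_pos_nonneg; lia).
  rewrite (Z.div_mod T (r ^ Z.of_nat m)) at 1 by lia.
  rewrite digits_decomp by lia.
  rewrite Z.mul_add_distr_r, Z.mul_add_distr_r.
  apply add_proper.
  - assert (E : x ^ Z.of_nat n = x ^ Z.of_nat m * x ^ 2)
      by (rewrite <- Z.pow_add_r by lia; f_equal; lia).
    rewrite E.
    replace (r ^ Z.of_nat m * (T / r ^ Z.of_nat m) * (x ^ Z.of_nat m * x ^ 2))
      with ((r*x) ^ Z.of_nat m * (T / r ^ Z.of_nat m * x ^ 2))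
      by (rewrite Z.pow_mul_l; ring).
    rewrite (pow_one_congr p (r*x) (Z.of_nat m)) by (lia || auto). ring_simplify. reflexivity.
  - unfold sum_range. rewrite !sum_list_mul.
    apply sum_list_congr. intros i Hi. apply in_seq in Hi.
    assert (Hi' : (1 <= i <= n - 2)%nat) by (unfold m in Hi; lia).
    rewrite (HM i Hi').
    assert (E : x ^ Z.of_nat n = x ^ (Z.of_nat i - 1) * (x ^ (Z.of_nat n - Z.of_nat i - 1) * x ^ 2))
      by (rewrite <- !Z.pow_add_r by lia; f_equal; lia).
    rewrite E.
    set (d := digit r T i).
    replace (d * r ^ (Z.of_nat i - 1) * (x ^ (Z.of_nat i - 1) * (x ^ (Z.of_nat n - Z.of_nat i - 1) * x ^ 2)))
      with ((r*x) ^ (Z.of_nat i - 1) * (d * x ^ (Z.of_nat n - Z.of_nat i - 1) * x ^ 2))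
      by (rewrite Z.pow_mul_l; ring).
    rewrite (pow_one_congr p (r*x) (Z.of_nat i - 1)) by (lia || auto). ring_simplify. reflexivity.
Qed.
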